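(* Let $K=\langle g,\gamma\rangle$ be a non-trivial torsion-free group, and suppose that for every nonzero $n\in\mathbb{Z}$ we have $\gamma^n\notin\langle\langle g\rangle\rangle_K$. Then there is a finitely generated torsion-free group $\Gamma$ and a non-trivial element $a\in\Gamma$ such that: (1) $K$ embeds as a subgroup of $\Gamma$ (identify $g,\gamma$ with their images); (2) the commutator $[a,\gamma]$ is non-trivial and centralizes $g$; (3) $[a,g]=1$.
   Context: $\langle\langle g\rangle\rangle_K$ denotes the normal closure of $g$ in $K$; $[x,y]$ denotes the group commutator. *)

(* Defs.v *)
From Stdlib Require Import ZArith List.

Record Group := {
  carrier :> Type;
  gmul : carrier -> carrier -> carrier;
  gone : carrier;
  ginv : carrier -> carrier;
  gmul_assoc : forall x y z, gmul x (gmul y z) = gmul (gmul x y) z;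
  gmul_1l : forall x, gmul gone x = x;
  gmul_1r : forall x, gmul x gone = x;
  gmul_Vl : forall x, gmul (ginv x) x = gone;
  gmul_Vr : forall x, gmul x (ginv x) = gone
}.

Arguments gmul {g} _ _.
Arguments gone {g}.
Arguments ginv {g} _.

Fixpoint gpow {G : Group} (x : G) (n : nat) : G :=
  match n with O => gone | S m => gmul x (gpow x m) end.

Definition gzpow {G : Group} (x : G) (n : Z) : G :=
  match n with
  | Z0 => gone
  | Zpos p => gpow x (Pos.to_nat p)
  | Zneg p => ginv (gpow x (Pos.to_nat p))
  end.

Definition comm {G : Group} (x y : G) : G :=
  gmul (gmul (gmul (ginv x) (ginv y)) x) y.

Inductive gen {G : Group} (S : G -> Prop) : G -> Prop :=
  | gen_base : forall x, S x -> gen S x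
  | gen_one : gen S gone
  | gen_mul : forall x y, gen S x -> gen S y -> gen S (gmul x y)
  | gen_inv : forall x, gen S x -> gen S (ginv x).

Definition generated_by2 {G : Group} (g c : G) : Prop :=
  forall x : G, gen (fun y => y = g \/ y = c) x.

Definition normal_closure {G : Group} (g : G) : G -> Prop :=
  gen (fun y => exists h : G, y = gmul (gmul (ginv h) g) h).

Definition nontrivial (G : Group) : Prop := exists x : G, x <> gone.

Definition torsion_free (G : Group) : Prop :=
  forall (x : G) (n : nat), (0 < n)%nat -> gpow x n = gone -> x = gone.

Definition finitely_generated (G : Group) : Prop :=
  exists l : list G, forall x : G, gen (fun y => In y l) x.

Definition is_hom {G H : Group} (f : G -> H) : Prop :=
  forall x y : G, f (gmul x y) = gmul (f x) (f y).

Definition injective {A B : Type} (f : A -> B) : Prop :=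
  forall x y, f x = f y -> x = y.

(* Main.v *)
Require Import Defs.
From Stdlib Require Import ZArith List Lia ClassicalEpsilon.

Lemma mul_inv_cancel_l (G : Group) (x y : G) : gmul (ginv x) (gmul x y) = y.
Proof. rewrite gmul_assoc, gmul_Vl, gmul_1l. reflexivity. Qed.
Lemma mul_cancel_l2 (G : Group) (x y : G) : gmul x (gmul (ginv x) y) = y.
Proof. rewrite gmul_assoc, gmul_Vr, gmul_1l. reflexivity. Qed.
Lemma inv_unique_r (G : Group) (x y : G) : gmul x y = gone -> ginv x = y.
Proof. intro H. rewrite <- (mul_inv_cancel_l G x y), H, gmul_1r. reflexivity. Qed.
Lemma inv_unique_l (G : Group) (x y : G) : gmul y x = gone -> y = ginv x.
Proof. intro H. rewrite <- (gmul_1r G y), <- (gmul_Vr G x), gmul_assoc, H, gmul_1l.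
  reflexivity. Qed.
Lemma inv_mul (G : Group) (x y : G) : ginv (gmul x y) = gmul (ginv y) (ginv x).
Proof. apply inv_unique_r. rewrite <- gmul_assoc, mul_cancel_l2, gmul_Vr. reflexivity. Qed.
Lemma inv_inv (G : Group) (x : G) : ginv (ginv x) = x.
Proof. apply inv_unique_r. apply gmul_Vl. Qed.
Lemma inv_one (G : Group) : ginv (@gone G) = gone.
Proof. apply inv_unique_r. apply gmul_1l. Qed.

Ltac gnorm := repeat progress (rewrite ?inv_mul, ?inv_inv, ?inv_one, ?gmul_1l, ?gmul_1r,
   <- ?gmul_assoc, ?mul_inv_cancel_l, ?mul_cancel_l2, ?gmul_Vl, ?gmul_Vr).

Lemma gen_eq (G : Group) (S : G -> Prop) x y : gen S x -> x = y -> gen S y.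
Proof. intros H ->. exact H. Qed.

Lemma gpow_add (G : Group) (x : G) n m : gpow x (n + m) = gmul (gpow x n) (gpow x m).
Proof. induction n; simpl. - rewrite gmul_1l; reflexivity.
  - rewrite IHn, gmul_assoc. reflexivity. Qed.
Lemma gpow_S_r (G : Group) (x : G) n : gpow x (S n) = gmul (gpow x n) x.
Proof. rewrite <- Nat.add_1_r, gpow_add. simpl. rewrite gmul_1r. reflexivity. Qed.

Lemma gzpow_succ (G : Group) (x : G) n : gzpow x (Z.succ n) = gmul x (gzpow x n).
Proof.
  destruct n as [|p|p].
  - simpl. reflexivity.
  - replace (Z.succ (Zpos p)) with (Zpos (Pos.succ p)) by lia.
    simpl. rewrite Pos2Nat.inj_succ. reflexivity.
  - destruct p as [|q] using Pos.peano_case.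
    + simpl. rewrite gmul_1r, gmul_Vr. reflexivity.
    + replace (Z.succ (Zneg (Pos.succ q))) with (Zneg q) by lia.
      simpl. rewrite Pos2Nat.inj_succ, gpow_S_r. gnorm. reflexivity.
Qed.
Lemma gzpow_pred (G : Group) (x : G) n : gzpow x (Z.pred n) = gmul (ginv x) (gzpow x n).
Proof. rewrite <- (Z.succ_pred n) at 2. rewrite gzpow_succ. gnorm. reflexivity. Qed.
Lemma gzpow_add (G : Group) (x : G) n m :
  gzpow x (n + m) = gmul (gzpow x n) (gzpow x m).
Proof.
  induction n using Z.peano_ind.
  - simpl. rewrite gmul_1l. reflexivity.
  - rewrite Z.add_succ_l, !gzpow_succ, IHn, gmul_assoc. reflexivity.
  - rewrite Z.add_pred_l, !gzpow_pred, IHn, gmul_assoc. reflexivity.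
Qed.
Lemma gzpow_opp (G : Group) (x : G) n : gzpow x (- n) = ginv (gzpow x n).
Proof. apply inv_unique_l. rewrite <- gzpow_add. rewrite Z.add_opp_diag_l. reflexivity. Qed.

Lemma comm_1l (G : Group) (x : G) : comm gone x = gone.
Proof. unfold comm. gnorm. reflexivity. Qed.
Lemma comm_1r (G : Group) (x : G) : comm x gone = gone.
Proof. unfold comm. gnorm. reflexivity. Qed.

Lemma hom_one (G H : Group) (f : G -> H) : is_hom f -> f gone = gone.
Proof. intro Hf. assert (E : f gone = gmul (f gone) (f gone)).
  { rewrite <- Hf, gmul_1l. reflexivity. }
  rewrite <- (mul_inv_cancel_l H (f gone) (f gone)), <- E, gmul_Vl. reflexivity. Qed.
Lemma hom_inv (G H : Group) (f : G -> H) x : is_hom f -> f (ginv x) = ginv (f x).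
Proof. intro Hf. apply inv_unique_l. rewrite <- Hf, gmul_Vl. apply hom_one; exact Hf. Qed.

Lemma gen_hom (G H : Group) (f : G -> H) (S : G -> Prop) (T : H -> Prop) x :
  is_hom f -> (forall y, S y -> T (f y)) -> gen S x -> gen T (f x).
Proof.
  intros Hf HST Hx. induction Hx.
  - apply gen_base; auto.
  - rewrite hom_one by exact Hf. apply gen_one.
  - rewrite Hf. apply gen_mul; auto.
  - rewrite hom_inv by exact Hf. apply gen_inv; auto.
Qed.

Definition pmul (G H : Group) (p q : G * H) : G * H :=
  (gmul (fst p) (fst q), gmul (snd p) (snd q)).
Definition pinv (G H : Group) (p : G * H) : G * H := (ginv (fst p), ginv (snd p)).

Lemma pmul_assoc (G H : Group) : forall x y z : G * H,
  pmul G H x (pmul G H y z) = pmul G H (pmul G H x y) z.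
Proof. intros [] [] []. unfold pmul; simpl. rewrite !gmul_assoc. reflexivity. Qed.
Lemma pmul_1l (G H : Group) : forall x : G * H, pmul G H (gone, gone) x = x.
Proof. intros []. unfold pmul; simpl. rewrite !gmul_1l. reflexivity. Qed.
Lemma pmul_1r (G H : Group) : forall x : G * H, pmul G H x (gone, gone) = x.
Proof. intros []. unfold pmul; simpl. rewrite !gmul_1r. reflexivity. Qed.
Lemma pmul_Vl (G H : Group) : forall x : G * H, pmul G H (pinv G H x) x = (gone, gone).
Proof. intros []. unfold pmul; simpl. rewrite !gmul_Vl. reflexivity. Qed.
Lemma pmul_Vr (G H : Group) : forall x : G * H, pmul G H x (pinv G H x) = (gone, gone).
Proof. intros []. unfold pmul; simpl. rewrite !gmul_Vr. reflexivity. Qed.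

Definition Prod (G H : Group) : Group :=
  {| carrier := (G * H)%type; gmul := pmul G H; gone := (gone, gone); ginv := pinv G H;
     gmul_assoc := pmul_assoc G H; gmul_1l := pmul_1l G H; gmul_1r := pmul_1r G H;
     gmul_Vl := pmul_Vl G H; gmul_Vr := pmul_Vr G H |}.

Lemma gpow_prod (G H : Group) (x : G) (y : H) n :
  @gpow (Prod G H) (x, y) n = (gpow x n, gpow y n).
Proof. induction n; simpl. reflexivity. rewrite IHn. reflexivity. Qed.

Definition hmul (p q : Z * Z * Z) : Z * Z * Z :=
  let '(a, b, c) := p in let '(a', b', c') := q in (a + a', b + b', c + c' + a * b')%Z.
Definition hinv (p : Z * Z * Z) : Z * Z * Z :=
  let '(a, b, c) := p in (- a, - b, - c + a * b)%Z.

Lemma teq (a b c a' b' c' : Z) : a = a' -> b = b' -> c = c' -> (a, b, c) = (a', b', c').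
Proof. intros -> -> ->. reflexivity. Qed.

Lemma hmul_assoc : forall x y z, hmul x (hmul y z) = hmul (hmul x y) z.
Proof. intros [[] ] [[] ] [[] ]. simpl. apply teq; ring. Qed.
Lemma hmul_1l : forall x, hmul (0, 0, 0)%Z x = x.
Proof. intros [[] ]. simpl. apply teq; ring. Qed.
Lemma hmul_1r : forall x, hmul x (0, 0, 0)%Z = x.
Proof. intros [[] ]. simpl. apply teq; ring. Qed.
Lemma hmul_Vl : forall x, hmul (hinv x) x = (0, 0, 0)%Z.
Proof. intros [[] ]. simpl. apply teq; ring. Qed.
Lemma hmul_Vr : forall x, hmul x (hinv x) = (0, 0, 0)%Z.
Proof. intros [[] ]. simpl. apply teq; ring. Qed.

Definition Heis : Group :=
  {| carrier := (Z * Z * Z)%type; gmul := hmul; gone := (0, 0, 0)%Z; ginv := hinv;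
     gmul_assoc := hmul_assoc; gmul_1l := hmul_1l; gmul_1r := hmul_1r;
     gmul_Vl := hmul_Vl; gmul_Vr := hmul_Vr |}.

Lemma hpow (a b c : Z) n : exists z,
  @gpow Heis (a, b, c) n = (Z.of_nat n * a, Z.of_nat n * b, z)%Z.
Proof.
  induction n as [|n [z IH]].
  - exists 0%Z. reflexivity.
  - simpl gpow. rewrite IH. eexists. rewrite Nat2Z.inj_succ. simpl. apply teq; [lia|lia|reflexivity].
Qed.
Lemma hpow0 (c : Z) n : @gpow Heis (0, 0, c)%Z n = (0, 0, Z.of_nat n * c)%Z.
Proof.
  induction n as [|n IH].
  - reflexivity.
  - simpl gpow. rewrite IH. rewrite Nat2Z.inj_succ. simpl. apply teq; lia.
Qed.

Lemma Heis_tf : torsion_free Heis.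
Proof.
  intros [[a b] c] n Hn E.
  destruct (hpow a b c n) as [z Ez]. pose proof E as E0. rewrite Ez in E. simpl in E.
  injection E as E1 E2 E3.
  assert (a = 0%Z) by nia. assert (b = 0%Z) by nia. subst a b.
  rewrite hpow0 in E0. simpl in E0. injection E0 as E0.
  assert (c = 0%Z) by nia. subst c. reflexivity.
Qed.

Definition e1 : Heis := (1, 0, 0)%Z.
Definition e2 : Heis := (0, 1, 0)%Z.
Ltac hsimpl := cbv beta iota delta [gmul ginv gone Heis hmul hinv e1 e2].


Lemma Heis_gen (h : Heis) : gen (fun y => y = e1 \/ y = e2) h.
Proof.
  set (S := fun y : Heis => y = e1 \/ y = e2).
  assert (HA : forall n, gen S ((n, 0, 0)%Z : Heis)).
  { intro n; induction n using Z.peano_ind.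
    - exact (gen_one S).
    - eapply gen_eq. apply gen_mul. apply gen_base. left; reflexivity. exact IHn.
      hsimpl; apply teq; lia.
    - eapply gen_eq. apply gen_mul. apply gen_inv. apply gen_base. left; reflexivity. exact IHn.
      hsimpl; apply teq; lia. }
  assert (HB : forall n, gen S ((0, n, 0)%Z : Heis)).
  { intro n; induction n using Z.peano_ind.
    - exact (gen_one S).
    - eapply gen_eq. apply gen_mul. apply gen_base. right; reflexivity. exact IHn.
      hsimpl; apply teq; lia.
    - eapply gen_eq. apply gen_mul. apply gen_inv. apply gen_base. right; reflexivity. exact IHn.
      hsimpl; apply teq; lia. }
  assert (Hz : gen S ((0, 0, 1)%Z : Heis)).
  { eapply gen_eq. apply gen_mul. apply gen_inv. apply gen_mul.
    apply gen_base; right; reflexivity. apply gen_base; left; reflexivity.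
    apply gen_mul. apply gen_base; left; reflexivity. apply gen_base; right; reflexivity.
    reflexivity. }
  assert (HC : forall n, gen S ((0, 0, n)%Z : Heis)).
  { intro n; induction n using Z.peano_ind.
    - exact (gen_one S).
    - eapply gen_eq. apply gen_mul. exact Hz. exact IHn.
      hsimpl; apply teq; lia.
    - eapply gen_eq. apply gen_mul. apply gen_inv. exact Hz. exact IHn.
      hsimpl; apply teq; lia. }
  destruct h as [[a b] c].
  eapply gen_eq. apply gen_mul. apply gen_mul. apply (HA a). apply (HB b). apply (HC (c - a * b)%Z).
  hsimpl; apply teq; lia.
Qed.

Lemma N_conj (K : Group) (g u : K) : normal_closure g u ->
  forall h, normal_closure g (gmul (gmul (ginv h) u) h).
Proof.
  intros Hu h. induction Hu.
  - destruct H as [k ->]. apply gen_base. exists (gmul k h). gnorm. reflexivity.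
  - eapply gen_eq. apply gen_one. gnorm. reflexivity.
  - eapply gen_eq. apply gen_mul. exact IHHu1. exact IHHu2. gnorm. reflexivity.
  - eapply gen_eq. apply gen_inv. exact IHHu. gnorm. reflexivity.
Qed.

Definition Pr (K : Group) (g gam : K) (x : K) (n : Z) : Prop :=
  normal_closure g (gmul (ginv (gzpow gam n)) x).

Lemma Pr_mul (K : Group) (g gam x y : K) n m :
  Pr K g gam x n -> Pr K g gam y m -> Pr K g gam (gmul x y) (n + m).
Proof.
  unfold Pr. intros Hx Hy. rewrite gzpow_add.
  eapply gen_eq. apply gen_mul. apply (N_conj K g _ Hx (gzpow gam m)). exact Hy.
  gnorm. reflexivity.
Qed.

Lemma Pr_inv (K : Group) (g gam x : K) n :
  Pr K g gam x n -> Pr K g gam (ginv x) (- n).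
Proof.
  unfold Pr. intros Hx. rewrite gzpow_opp.
  eapply gen_eq. apply (N_conj K g _ (gen_inv _ _ Hx) (ginv (gzpow gam n))).
  gnorm. reflexivity.
Qed.

Lemma Pr_g (K : Group) (g gam : K) : Pr K g gam g 0.
Proof. unfold Pr. apply gen_base. exists gone. simpl. gnorm. reflexivity. Qed.
Lemma Pr_gam (K : Group) (g gam : K) : Pr K g gam gam 1.
Proof. unfold Pr. simpl. eapply gen_eq. apply gen_one. gnorm. reflexivity. Qed.

Lemma Pr_ex (K : Group) (g gam : K) : generated_by2 g gam -> forall x, exists n, Pr K g gam x n.
Proof.
  intros Hgen x. induction (Hgen x).
  - destruct H as [-> | ->]. exists 0%Z; apply Pr_g. exists 1%Z; apply Pr_gam.
  - exists 0%Z. unfold Pr. simpl. eapply gen_eq. apply gen_one. gnorm. reflexivity.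
  - destruct IHg0_1 as [n Hn], IHg0_2 as [m Hm]. exists (n + m)%Z. apply Pr_mul; auto.
  - destruct IHg0 as [n Hn]. exists (- n)%Z. apply Pr_inv; auto.
Qed.

Lemma Pr_uniq (K : Group) (g gam : K) :
  (forall n : Z, n <> 0%Z -> ~ normal_closure g (gzpow gam n)) ->
  forall x n m, Pr K g gam x n -> Pr K g gam x m -> n = m.
Proof.
  intros Hn x n m Hx Hy. unfold Pr in *.
  destruct (Z.eq_dec (- n + m) 0) as [E|E]. lia.
  exfalso. apply (Hn _ E). rewrite gzpow_add, gzpow_opp.
  eapply gen_eq. apply gen_mul. exact Hx. apply gen_inv. exact Hy. gnorm. reflexivity.
Qed.

Theorem lemma3p2 (K : Group) (g gam : K) :
  generated_by2 g gam ->
  nontrivial K ->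
  torsion_free K ->
  (forall n : Z, n <> 0%Z -> ~ normal_closure g (gzpow gam n)) ->
  exists (Gam : Group) (phi : K -> Gam) (a : Gam),
    finitely_generated Gam /\ torsion_free Gam /\
    a <> gone /\
    is_hom phi /\ injective phi /\
    comm a (phi gam) <> gone /\
    gmul (comm a (phi gam)) (phi g) = gmul (phi g) (comm a (phi gam)) /\
    comm a (phi g) = gone.
Proof.
  intros Hgen _ Htf Hn.
  pose (pi := fun x => proj1_sig (constructive_indefinite_description _ (Pr_ex K g gam Hgen x))).
  assert (piP : forall x, Pr K g gam x (pi x)).
  { intro x. exact (proj2_sig (constructive_indefinite_description _ (Pr_ex K g gam Hgen x))). }
  assert (pi_mul : forall x y, pi (gmul x y) = (pi x + pi y)%Z).
  { intros x y. eapply Pr_uniq. exact Hn. apply piP. apply Pr_mul; apply piP. }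
  assert (pi_g : pi g = 0%Z).
  { eapply Pr_uniq. exact Hn. apply piP. apply Pr_g. }
  assert (pi_gam : pi gam = 1%Z).
  { eapply Pr_uniq. exact Hn. apply piP. apply Pr_gam. }
  exists (Prod K Heis), (fun x => (x, (pi x, 0, 0)%Z) : Prod K Heis), (gone, e2) .
  cbv beta. rewrite pi_g, pi_gam.
  split; [|split; [|split; [|split; [|split; [|split; [|split]]]]]].
  - exists ((g, gone) :: (gam, gone) :: (gone, e1) :: (gone, e2) :: nil).
    intros [x h].
    eapply gen_eq. apply (gen_mul _ ((x, gone) : Prod K Heis) ((gone, h) : Prod K Heis)).
    + apply (gen_hom K (Prod K Heis) (fun y => (y, gone)) (fun y => y = g \/ y = gam)).
      * intros y z. simpl. unfold pmul. simpl. reflexivity.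
      * intros y [-> | ->]; simpl; auto.
      * apply Hgen.
    + apply (gen_hom Heis (Prod K Heis) (fun y => (gone, y)) (fun y => y = e1 \/ y = e2)).
      * intros y z. simpl. unfold pmul. simpl. rewrite gmul_1l. reflexivity.
      * intros y [-> | ->]; simpl; auto.
      * apply Heis_gen.
    + simpl. unfold pmul. simpl. rewrite gmul_1r. destruct h as [[? ?] ?]. rewrite Z.add_0_r. reflexivity.
  - intros [x h] n Hpos E. rewrite gpow_prod in E. simpl in E. injection E as E1 E2.
    rewrite (Htf x n Hpos E1), (Heis_tf h n Hpos E2). reflexivity.
  - intro E. injection E as E. discriminate.
  - intros x y. simpl. unfold pmul. simpl. rewrite pi_mul. f_equal. apply teq; ring.
  - intros x y E. injection E as E. exact E.
  - intro E. injection E as E1 E2. discriminate.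
  - simpl. unfold pmul, pinv. simpl. f_equal. gnorm. reflexivity.
  - simpl. unfold pmul, pinv. simpl. f_equal. gnorm. reflexivity.
Qed.
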